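(* There is an algorithm which, given a rigid $321$-avoiding permutation $\pi$ of size $k$ and a $321$-avoiding permutation $\tau$ of size $n$, outputs an embedding of $\pi$ into $\tau$ (namely the minimum embedding with respect to the pointwise order on rigid mappings) if one exists and reports failure otherwise, and whose running time is $O(kn)$.
   Context: Permutations are identified with their sets of points $(i,\sigma(i))$; an embedding of $\pi$ into $\tau$ is an injective map between point sets preserving the relative horizontal and vertical order of every pair. In a $321$-avoiding permutation $\sigma$, $x$ is an upper element if some point lies to its right and below it, a lower element if some point lies to its left and above it; $U_\sigma$ and $L_\sigma$ denote these sets; $\sigma$ is rigid if every element is upper or lower. On $U_\sigma$ and on $L_\sigma$ the linear order is $x\le y$ iff $x=y$ or $y$ is above and right of $x$. Rigid mappings $f:\pi\to\tau$ (with $f(U_\pi)\subseteq U_\tau$, $f(L_\pi)\subseteq L_\tau$) are ordered pointwise; when $\tau$ contains $\pi$, the set of embeddings of a rigid $\pi$ into $\tau$ has a least element under this order, the minimum embedding. *)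

(* Defs.v *)
From mathcomp Require Import all_boot all_order all_fingroup.
Set Implicit Arguments. Unset Strict Implicit. Unset Printing Implicit Defensive.

(* Permutations: a permutation of size k is s : {perm 'I_k}; its point
   set is {(i, s i)}.  Points are identified with their abscissa i.   *)

Definition avoids321 k (s : {perm 'I_k}) : Prop :=
  ~ exists i j l : 'I_k, [/\ i < j, j < l, s j < s i & s l < s j].

Definition upper k (s : {perm 'I_k}) (i : 'I_k) : Prop :=
  exists j : 'I_k, i < j /\ s j < s i.
Definition lower k (s : {perm 'I_k}) (i : 'I_k) : Prop :=
  exists j : 'I_k, j < i /\ s i < s j.

Definition rigid k (s : {perm 'I_k}) : Prop :=
  forall i, upper s i \/ lower s i.

(* An embedding of pi into tau, as a map on points (abscissae):
   preserves the relative horizontal and vertical order of every pair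
   (injectivity follows). *)
Definition embedding k n (pi : {perm 'I_k}) (tau : {perm 'I_n})
  (f : 'I_k -> 'I_n) : Prop :=
  forall i j : 'I_k, (i < j) = (f i < f j) /\ (pi i < pi j) = (tau (f i) < tau (f j)).

Definition rigid_mapping k n (pi : {perm 'I_k}) (tau : {perm 'I_n})
  (f : 'I_k -> 'I_n) : Prop :=
  forall i, (upper pi i -> upper tau (f i)) /\ (lower pi i -> lower tau (f i)).

Definition le_pt n (tau : {perm 'I_n}) (x y : 'I_n) : Prop :=
  x = y \/ (x < y /\ tau x < tau y).

Definition le_map k n (tau : {perm 'I_n}) (f g : 'I_k -> 'I_n) : Prop :=
  forall i, le_pt tau (f i) (g i).

Definition min_embedding k n (pi : {perm 'I_k}) (tau : {perm 'I_n})
  (f : 'I_k -> 'I_n) : Prop :=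
  embedding pi tau f /\ rigid_mapping pi tau f /\
  forall g, embedding pi tau g -> rigid_mapping pi tau g -> le_map tau f g.

(* Computation model: a unit-cost RAM-style WHILE language over nat,
   with registers (indexed by nat) and arrays (indexed by nat), and
   only +, truncated -, comparisons as primitive operations.  Every
   executed command (and every loop test) costs one step.              *)

Inductive aexp : Type :=
  | AConst of nat
  | AVar of nat
  | AAdd of aexp & aexp
  | ASub of aexp & aexp
  | ARead of nat & aexp.

Inductive bexp : Type :=
  | BTrue
  | BLt of aexp & aexp
  | BEq of aexp & aexp
  | BNot of bexp
  | BAnd of bexp & bexp.

Inductive cmd : Type :=
  | CSkip
  | CAssign of nat & aexp
  | CWrite of nat & aexp & aexp
  | CSeq of cmd & cmd
  | CIf of bexp & cmd & cmd
  | CWhile of bexp & cmd.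

Record mstate := MState { regs : nat -> nat; arrs : nat -> nat -> nat }.

Fixpoint aeval (s : mstate) (e : aexp) : nat :=
  match e with
  | AConst c => c
  | AVar x => regs s x
  | AAdd a b => aeval s a + aeval s b
  | ASub a b => aeval s a - aeval s b
  | ARead arr a => arrs s arr (aeval s a)
  end.

Fixpoint beval (s : mstate) (b : bexp) : bool :=
  match b with
  | BTrue => true
  | BLt a c => aeval s a < aeval s c
  | BEq a c => aeval s a == aeval s c
  | BNot b => ~~ beval s b
  | BAnd b c => beval s b && beval s c
  end.

Definition set_reg (s : mstate) x v : mstate :=
  MState (fun y => if y == x then v else regs s y) (arrs s).
Definition set_mem (s : mstate) arr i v : mstate :=
  MState (regs s) (fun a j => if (a == arr) && (j == i) then v else arrs s a j).

Inductive exec : cmd -> mstate -> nat -> mstate -> Prop :=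
  | ESkip s : exec CSkip s 1 s
  | EAssign s x e : exec (CAssign x e) s 1 (set_reg s x (aeval s e))
  | EWrite s arr e v :
      exec (CWrite arr e v) s 1 (set_mem s arr (aeval s e) (aeval s v))
  | ESeq c1 c2 s t1 s1 t2 s2 :
      exec c1 s t1 s1 -> exec c2 s1 t2 s2 -> exec (CSeq c1 c2) s (t1 + t2) s2
  | EIfT b c1 c2 s t s' :
      beval s b = true -> exec c1 s t s' -> exec (CIf b c1 c2) s t.+1 s'
  | EIfF b c1 c2 s t s' :
      beval s b = false -> exec c2 s t s' -> exec (CIf b c1 c2) s t.+1 s'
  | EWhileF b c s : beval s b = false -> exec (CWhile b c) s 1 s
  | EWhileT b c s t1 s1 t2 s2 :
      beval s b = true -> exec c s t1 s1 -> exec (CWhile b c) s1 t2 s2 ->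
      exec (CWhile b c) s (t1 + t2).+1 s2.

(* Input encoding: register 0 = k, register 1 = n, array 0 holds pi
   (pi(i) at index i < k), array 1 holds tau; everything else is 0.   *)
Definition perm_nat k (s : {perm 'I_k}) (i : nat) : nat :=
  if insub i is Some j then val (s j) else 0.

Definition init_state k n (pi : {perm 'I_k}) (tau : {perm 'I_n}) : mstate :=
  MState (fun x => if x == 0 then k else if x == 1 then n else 0)
         (fun a i => if a == 0 then perm_nat pi i
                     else if a == 1 then perm_nat tau i else 0).

(* Output convention: register 2 = 1 signals success, with the
   embedding f stored in array 2 (f(i) at index i); register 2 = 0
   signals failure. *)

(* Main.v *)
Require Import Defs.
From mathcomp Require Import all_boot all_order all_fingroup.
From mathcomp Require Import zify.
Set Implicit Arguments. Unset Strict Implicit. Unset Printing Implicit Defensive.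

Definition lowN (f : nat -> nat) (i : nat) : bool := has (fun j => f i < f j) (iota 0 i).

Lemma perm_natE k (s : {perm 'I_k}) (o : 'I_k) : perm_nat s o = s o.
Proof. by rewrite /perm_nat valK. Qed.

Lemma perm_nat_lt k (s : {perm 'I_k}) i : i < k -> perm_nat s i < k.
Proof. by move=> H; rewrite -[i]/(val (Ordinal H)) perm_natE. Qed.

Lemma lowN_lower k (s : {perm 'I_k}) (o : 'I_k) : lowN (perm_nat s) o <-> lower s o.
Proof.
split.
- case/hasP=> j; rewrite mem_iota add0n => /andP[_ Hj] H.
  have Hjk : j < k by apply: ltn_trans Hj (ltn_ord o).
  exists (Ordinal Hjk); split=> //.
  by move: H; rewrite -[j]/(val (Ordinal Hjk)) !perm_natE.
- case=> j [Hj H]; apply/hasP; exists (val j); first by rewrite mem_iota.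
  by rewrite !perm_natE.
Qed.

Lemma upper_not_lower n (t : {perm 'I_n}) (o : 'I_n) :
  avoids321 t -> upper t o -> ~ lower t o.
Proof.
move=> Av [j [Hj Hj']] [r [Hr Hr']]; apply: Av; exists r, o, j; split=> //.
Qed.

Lemma chain n (t : {perm 'I_n}) (p q : 'I_n) : avoids321 t ->
  lowN (perm_nat t) p = lowN (perm_nat t) q -> p < q -> t p < t q.
Proof.
move=> Av Heq Hpq.
case Hq: (lowN (perm_nat t) q) Heq => Hp.
- have /lowN_lower [r [Hr Hr']] := Hp.
  rewrite ltnNge leq_eqVlt negb_or; apply/andP; split.
  + apply/negP=> /eqP/val_inj/perm_inj E; by move: Hpq; rewrite E ltnn.
  + apply/negP=> Hqp; apply: Av; exists r, p, q; split=> //.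
- rewrite ltnNge leq_eqVlt negb_or; apply/andP; split.
  + apply/negP=> /eqP/val_inj/perm_inj E; by move: Hpq; rewrite E ltnn.
  + apply/negP=> Hqp; move: Hq; rewrite (_ : lowN _ _ = true) //.
    apply/lowN_lower; exists p; split=> //.
Qed.

Lemma chain_le n (t : {perm 'I_n}) (p q : 'I_n) : avoids321 t ->
  lowN (perm_nat t) p = lowN (perm_nat t) q -> p <= q -> t p <= t q.
Proof.
move=> Av Heq; rewrite leq_eqVlt => /orP[/eqP/val_inj->//|H].
exact/ltnW/chain.
Qed.

Lemma emb_class k n (pi : {perm 'I_k}) (tau : {perm 'I_n}) y :
  rigid pi -> avoids321 tau -> embedding pi tau y ->
  forall i, lowN (perm_nat tau) (y i) = lowN (perm_nat pi) i.
Proof.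
move=> Rg Av E i.
case Hi: (lowN (perm_nat pi) i).
- have /lowN_lower [j [Hj Hj']] := Hi.
  apply/lowN_lower; exists (y j); have [E1 E2] := E j i; have [E3 E4] := E i j.
  by rewrite -E1 -E4.
- apply/negbTE/negP=> /lowN_lower Hl.
  case: (Rg i) => [[j [Hj Hj']]|Hlo]; last by move: Hi; rewrite (_ : lowN _ _ = true) //; exact/lowN_lower.
  apply: (upper_not_lower Av _ Hl); exists (y j).
  have [E1 E2] := E i j; have [E3 E4] := E j i; by rewrite -E1 -E4.
Qed.

Lemma emb_rigid k n (pi : {perm 'I_k}) (tau : {perm 'I_n}) y :
  embedding pi tau y -> rigid_mapping pi tau y.
Proof.
move=> E i; split.
- case=> j [Hj Hj']; exists (y j); have [E1 E2] := E i j; have [E3 E4] := E j i.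
  by rewrite -E1 -E4.
- case=> j [Hj Hj']; exists (y j); have [E1 E2] := E j i; have [E3 E4] := E i j.
  by rewrite -E1 -E4.
Qed.

Lemma lowN_ext f g j : (forall i, f i = g i) -> lowN f j = lowN g j.
Proof. by move=> H; rewrite /lowN; apply: eq_has => i /=; rewrite !H. Qed.

Set Implicit Arguments. Unset Strict Implicit. Unset Printing Implicit Defensive.

Definition runs c s (Q : mstate -> Prop) T :=
  exists t s', exec c s t s' /\ t <= T /\ Q s'.

Lemma runs_weak c s (Q Q' : mstate -> Prop) T T' :
  runs c s Q T -> T <= T' -> (forall s, Q s -> Q' s) -> runs c s Q' T'.
Proof.
move=> [t [s' [E [Ht Q1]]]] HT HQ; exists t, s'; split=> //; split; [lia|exact: HQ].
Qed.

Lemma runs_skip s (Q : mstate -> Prop) : Q s -> runs CSkip s Q 1.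
Proof. by move=> H; exists 1, s; split; [constructor|]. Qed.

Lemma runs_assign s x e (Q : mstate -> Prop) :
  Q (set_reg s x (aeval s e)) -> runs (CAssign x e) s Q 1.
Proof. by move=> H; eexists; eexists; split; [constructor|]. Qed.

Lemma runs_write s a e v (Q : mstate -> Prop) :
  Q (set_mem s a (aeval s e) (aeval s v)) -> runs (CWrite a e v) s Q 1.
Proof. by move=> H; eexists; eexists; split; [constructor|]. Qed.

Lemma runs_seq c1 c2 s Q1 Q T1 T2 :
  runs c1 s Q1 T1 -> (forall s1, Q1 s1 -> runs c2 s1 Q T2) ->
  runs (CSeq c1 c2) s Q (T1 + T2).
Proof.
move=> [t1 [s1 [E1 [H1 Q1s]]]] H; have [t2 [s2 [E2 [H2 Q2]]]] := H _ Q1s.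
exists (t1 + t2), s2; split; [econstructor; eauto|split=> //; lia].
Qed.

Lemma runs_if b c1 c2 s Q T :
  (if beval s b then runs c1 s Q T else runs c2 s Q T) ->
  runs (CIf b c1 c2) s Q T.+1.
Proof.
case E: (beval s b) => [] [t [s' [Ex [Ht Hq]]]]; exists t.+1, s'; split.
- exact: EIfT. - by split.
- exact: EIfF. - by split.
Qed.

Lemma runs_while b c (I : mstate -> Prop) (m : mstate -> nat) cb s :
  (forall s, I s -> beval s b -> runs c s (fun s' => I s' /\ m s' < m s) cb) ->
  I s -> runs (CWhile b c) s (fun s' => I s' /\ beval s' b = false) (m s * cb.+1 + 1).
Proof.
move=> Hb; have [N HN] : exists N, m s < N by exists (m s).+1.
elim: N s HN => [//|N IH] s HN Is.
case E: (beval s b).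
- have [t1 [s1 [E1 [H1 [I1 Hm]]]]] := Hb s Is E.
  have [t2 [s2 [E2 [H2 Q2]]]] := IH s1 (leq_trans Hm (HN : m s < N.+1)) I1.
  exists (t1 + t2).+1, s2; split; first exact: EWhileT E E1 E2.
  split=> //.
  have: m s1 * cb.+1 + cb.+1 <= m s * cb.+1 by rewrite -mulSnr leq_mul2r Hm orbT.
  lia.
- exists 1, s; split; [exact: EWhileF|split=> //; lia].
Qed.

Lemma runs_assign_seq x e c s Q T :
  runs c (set_reg s x (aeval s e)) Q T -> runs (CSeq (CAssign x e) c) s Q T.+1.
Proof.
move=> H; have -> : T.+1 = 1 + T by [].
apply: (runs_seq (Q1 := fun s' => s' = set_reg s x (aeval s e))); first exact: runs_assign.
by move=> s1 ->.
Qed.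

Lemma runs_write_seq a e v c s Q T :
  runs c (set_mem s a (aeval s e) (aeval s v)) Q T -> runs (CSeq (CWrite a e v) c) s Q T.+1.
Proof.
move=> H; have -> : T.+1 = 1 + T by [].
apply: (runs_seq (Q1 := fun s' => s' = set_mem s a (aeval s e) (aeval s v))); first exact: runs_write.
by move=> s1 ->.
Qed.

Lemma runs_skip_seq c s Q T : runs c s Q T -> runs (CSeq CSkip c) s Q T.+1.
Proof.
move=> H; have -> : T.+1 = 1 + T by [].
apply: (runs_seq (Q1 := fun s' => s' = s)); first exact: runs_skip.
by move=> s1 ->.
Qed.

Lemma runs_if_seq b c1 c2 c s Q T :
  (if beval s b then runs (CSeq c1 c) s Q T else runs (CSeq c2 c) s Q T) ->
  runs (CSeq (CIf b c1 c2) c) s Q T.+1.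
Proof.
case E: (beval s b) => -[t [s' [Ex [Ht Hq]]]]; inversion Ex; subst.
- exists (t1.+1 + t2), s'; split; [apply: ESeq; [apply: EIfT; eassumption|eassumption]|split=> //; lia].
- exists (t1.+1 + t2), s'; split; [apply: ESeq; [apply: EIfF; eassumption|eassumption]|split=> //; lia].
Qed.

Lemma runs_seqA c1 c2 c3 s Q T :
  runs (CSeq c1 (CSeq c2 c3)) s Q T -> runs (CSeq (CSeq c1 c2) c3) s Q T.
Proof.
move=> [t [s' [Ex [Ht Hq]]]]; inversion Ex as [| | |c1' c2' s0 ta sa tb sb Ea Eb| | | |]; subst.
inversion Eb as [| | |c1'' c2'' s0' tc sc td sd Ec Ed| | | |]; subst.
exists (ta + tc + td), s'; split; [apply: ESeq; [apply: ESeq; eassumption|eassumption]|split=> //; lia].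
Qed.

Lemma runs_one c s Q T : runs (CSeq c CSkip) s Q T.+1 -> runs c s Q T.
Proof.
move=> [t [s' [Ex [Ht Hq]]]]; inversion Ex; subst; match goal with H : exec CSkip _ _ _ |- _ => inversion H; subst end.
exists t1, s'; split=> //; split=> //; lia.
Qed.

Lemma runs_skip_any s (Q : mstate -> Prop) T : Q s -> runs CSkip s Q T.+1.
Proof. by move=> H; apply: runs_weak (runs_skip H) _ _. Qed.

Lemma runs_assign_any s x e (Q : mstate -> Prop) T :
  Q (set_reg s x (aeval s e)) -> runs (CAssign x e) s Q T.+1.
Proof. by move=> H; apply: runs_weak (runs_assign H) _ _. Qed.

Lemma runs_seq_w c1 c2 s Q1 Q T1 T1' T2 :
  runs c1 s Q1 T1 -> T1 <= T1' -> (forall s1, Q1 s1 -> runs c2 s1 Q T2) ->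
  runs (CSeq c1 c2) s Q (T1' + T2).
Proof. move=> H1 Hle H2; apply: runs_seq H2; exact: runs_weak H1 Hle _. Qed.

Set Implicit Arguments. Unset Strict Implicit. Unset Printing Implicit Defensive.

Lemma step_mono (g : nat -> nat) k :
  (forall i, 0 < i -> i < k -> g (i - 1) < g i) ->
  forall i j, i < j -> j < k -> g i < g j.
Proof.
move=> H i j; elim: j => // j IH Hij Hjk.
have := H j.+1 isT Hjk; rewrite subn1 /=.
rewrite ltnS leq_eqVlt in Hij; case/orP: Hij => [/eqP->//|Hij] Hj.
apply: ltn_trans (IH Hij (ltnW Hjk)) Hj.
Qed.

Lemma mono_eq (g : nat -> nat) k :
  (forall i j, i < j -> j < k -> g i < g j) ->
  forall i j, i < k -> j < k -> (i < j) = (g i < g j).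
Proof.
move=> H i j Hi Hj; case: (ltngtP i j) => [Hij|Hij|->].
- by rewrite H.
- by apply/esym/negbTE; rewrite -leqNgt ltnW // H.
- by rewrite ltnn.
Qed.

Lemma nat_of_bool_eq (a b : bool) : (nat_of_bool a == nat_of_bool b) = (a == b).
Proof. by case: a; case: b. Qed.

Lemma perm_nat_inj k (s : {perm 'I_k}) p q :
  p < k -> q < k -> perm_nat s p = perm_nat s q -> p = q.
Proof.
move=> Hp Hq; rewrite -[p]/(val (Ordinal Hp)) -[q]/(val (Ordinal Hq)) !perm_natE.
by move=> /val_inj/perm_inj/(congr1 val).
Qed.

Definition violm (A : nat -> nat -> nat) (b : nat) : bool :=
  let x := A 2 in
  let a := A 6 (A 0 b - 1) in
  [|| A 3 (x b) != A 5 b,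
      (0 < b) && (x b < x (b - 1) + 1) |
      (0 < A 0 b) && [&& A 3 (x a) == A 5 a, A 3 (x b) == A 5 b & A 1 (x b) < A 1 (x a)]].

Section Alg.
Variables (k n : nat) (pi : {perm 'I_k}) (tau : {perm 'I_n}).
Hypotheses (Api : avoids321 pi) (Rpi : rigid pi) (Atau : avoids321 tau).
Local Notation pn := (perm_nat pi).
Local Notation tn := (perm_nat tau).

Definition good (A : nat -> nat -> nat) : Prop :=
  [/\ forall i, A 0 i = pn i, forall i, A 1 i = tn i,
      forall j, j < n -> A 3 j = lowN tn j,
      forall i, i < k -> A 5 i = lowN pn i &
      forall i, i < k -> A 6 (pn i) = i].

Definition xok (A : nat -> nat -> nat) := forall i, i < k -> A 2 i < n.
Definition below (A : nat -> nat -> nat) :=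
  forall y, embedding pi tau y -> forall i : 'I_k, A 2 i <= y i.

Lemma inv_spec A : good A -> forall v, v < k -> A 6 v < k /\ pn (A 6 v) = v.
Proof.
rewrite /good; case=> _ _ _ _ G6 v Hv.
set o := (pi^-1)%g (Ordinal Hv).
have E : pn o = v by rewrite perm_natE /o permKV.
rewrite -E G6 //; split=> //.
Qed.

Lemma justify A b (hb : b < k) : good A -> xok A -> below A -> violm A b ->
  forall y, embedding pi tau y -> A 2 b < y (Ordinal hb).
Proof.
move=> G X B V y E; have G' := G; rewrite /good in G'; case: G' => G0 G1 G3 G5 G6.
set ob := Ordinal hb.
have Hle := B y E ob; rewrite ltn_neqAle Hle andbT; apply/negP => /eqP Heq.
have Xb : A 2 b < n := X b hb.
move: V; rewrite /violm => /or3P[].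
- rewrite G3 // G5 // nat_of_bool_eq Heq (emb_class Rpi Atau E) /=.
  by rewrite eqxx.
- case/andP=> Hb0 Hlt.
  have hb' : b - 1 < k by lia.
  have := B y E (Ordinal hb'); have [E1 _] := E (Ordinal hb') ob.
  have : Ordinal hb' < ob by rewrite /= ; lia.
  rewrite E1 -/ob -Heq /= => H1 H2; lia.
- case/and4P=> Hp Ca Cb Ht.
  rewrite G0 in Hp Ht Ca.
  have Hv : pn b - 1 < k by have := perm_nat_lt pi hb; lia.
  have [Ha Hpa] := inv_spec G Hv.
  set a := A 6 (pn b - 1) in Ha Hpa Ca Ht.
  set oa := Ordinal Ha.
  have Xa : A 2 a < n := X a Ha.
  move: Ca; rewrite G3 // G5 // nat_of_bool_eq => /eqP Ca.
  rewrite -(emb_class Rpi Atau E oa) in Ca.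
  have Hchain := chain_le Atau (p := Ordinal Xa) (q := y oa) Ca (B y E oa).
  have [_ E2] := E oa ob.
  have : pi oa < pi ob by rewrite -!perm_natE /= Hpa; lia.
  rewrite E2 => Hv2.
  move: Ht; rewrite !G1.
  rewrite -[A 2 b]/(val (Ordinal Xb)) -[A 2 a]/(val (Ordinal Xa)) !perm_natE.
  have -> : Ordinal Xb = y ob by apply: val_inj; rewrite /= Heq.
  lia.
Qed.

Definition mkf (x : nat -> nat) (H : forall i, i < k -> x i < n) : 'I_k -> 'I_n :=
  fun i => Ordinal (H i (ltn_ord i)).

Lemma final A (X : xok A) : good A -> below A -> (forall b, b < k -> ~~ violm A b) ->
  min_embedding pi tau (mkf X).
Proof.
move=> G B NV; have G' := G; rewrite /good in G'; case: G' => G0 G1 G3 G5 G6.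
set x := A 2.
have Cl : forall i, i < k -> lowN tn (x i) = lowN pn i.
  move=> i Hi; have := NV i Hi; rewrite /violm => /norP[+ _].
  by rewrite negbK G3 ?X // G5 // nat_of_bool_eq => /eqP.
have Inc : forall i j, i < j -> j < k -> x i < x j.
  apply: step_mono => i Hi Hik; have := NV i Hik; rewrite /violm => /norP[_ /norP[+ _]].
  rewrite Hi /= -leqNgt. rewrite /x; lia.
have Xinj : forall i j, i < k -> j < k -> x i = x j -> i = j.
  move=> i j Hi Hj Hx; case: (ltngtP i j) => // H.
  - by have := Inc i j H Hj; rewrite Hx ltnn.
  - by have := Inc j i H Hi; rewrite Hx ltnn.
pose inv := A 6.
have Vert : forall v w, v < w -> w < k -> tn (x (inv v)) < tn (x (inv w)).
  apply: step_mono => w Hw Hwk.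
  have [Hb Hpb] := inv_spec G Hwk.
  have := NV _ Hb; rewrite /violm => /norP[_ /norP[_]].
  rewrite G0 Hpb Hw /= -/inv.
  have Hv : w - 1 < k by lia.
  have [Ha Hpa] := inv_spec G Hv.
  rewrite !G3 ?X // !G5 // !nat_of_bool_eq !Cl // !eqxx /= -leqNgt !G1.
  rewrite leq_eqVlt => /orP[/eqP H|//].
  have Xa := X _ Ha; have Xb := X _ Hb.
  move: H => /(perm_nat_inj Xa Xb)/(Xinj _ _ Ha Hb) E.
  move: Hpa; rewrite E Hpb; lia.
have Emb : embedding pi tau (mkf X).
  move=> i j; split.
  - by rewrite /= (mono_eq Inc).
  - have Ei : inv (pi i) = i by rewrite /inv -perm_natE G6.
    have Ej : inv (pi j) = j by rewrite /inv -perm_natE G6.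
    rewrite (mono_eq Vert) // Ei Ej /=.
    by rewrite -[x i]/(val (mkf X i)) -[x j]/(val (mkf X j)) !perm_natE.
split=> //; split; first exact: emb_rigid.
move=> g Eg _ i.
have Hle := B g Eg i.
rewrite /le_pt; rewrite leq_eqVlt in Hle; case/orP: Hle => [/eqP H|H].
- by left; apply: val_inj.
- right; split=> //; apply: chain => //.
  by rewrite /= Cl // (emb_class Rpi Atau Eg).
Qed.

End Alg.

Set Implicit Arguments. Unset Strict Implicit. Unset Printing Implicit Defensive.

Section Loc.
Variables (k n : nat) (pi : {perm 'I_k}) (tau : {perm 'I_n}).
Local Notation pn := (perm_nat pi).
Local Notation tn := (perm_nat tau).

Lemma viol_local A A' b b' : good pi tau A -> b < k -> b' < k ->
  (forall a j, a <> 2 -> a <> 7 -> A' a j = A a j) ->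
  (forall i, i <> b -> A' 2 i = A 2 i) ->
  b' <> b -> b' <> b.+1 -> ~ (pn b + 1 < k /\ b' = A 6 (pn b + 1)) ->
  violm A' b' = violm A b'.
Proof.
move=> G Hb Hb' HA HX N1 N2 N3.
have G' := G; rewrite /good in G'; case: G' => G0 G1 G3 G5 G6.
have E0 j : A' 0 j = A 0 j by rewrite HA.
have E1 j : A' 1 j = A 1 j by rewrite HA.
have E3 j : A' 3 j = A 3 j by rewrite HA.
have E5 j : A' 5 j = A 5 j by rewrite HA.
have E6 j : A' 6 j = A 6 j by rewrite HA.
rewrite /violm !E0 !E1 !E3 !E5 !E6 (HX b') //.
congr [|| _, _ | _].
- case: (posnP b') => [->//|Hp]; rewrite (HX (b' - 1)) //; lia.
- case: (posnP (A 0 b')) => [->//|Hp].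
  rewrite G0 in Hp *.
  have Hv : pn b' - 1 < k by have := perm_nat_lt pi Hb'; lia.
  have [Ha Hpa] := inv_spec G Hv.
  rewrite (HX (A 6 (pn b' - 1))) //.
  move=> Eab; apply: N3; rewrite Eab in Hpa; split; first by have := perm_nat_lt pi Hb'; lia.
  rewrite Hpa subnK //; by rewrite G6.
Qed.

Lemma sum_dec (x x' : nat -> nat) b : b < k -> x b < n ->
  (forall i, i <> b -> x' i = x i) -> x' b = x b + 1 ->
  \sum_(i < k) (n - x' i) + 1 = \sum_(i < k) (n - x i).
Proof.
move=> Hb Hx HX Eb.
rewrite (bigD1 (Ordinal Hb)) //= [in RHS](bigD1 (Ordinal Hb)) //= Eb.
rewrite (eq_bigr (fun i : 'I_k => n - x i)); first lia.
move=> i Hi; rewrite HX //; move=> E; move: Hi; rewrite -val_eqE /= E eqxx //.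
Qed.

Lemma sum_le (x : nat -> nat) : \sum_(i < k) (n - x i) <= k * n.
Proof.
have : \sum_(i < k) (n - x i) <= \sum_(i < k) n by apply: leq_sum => i _; lia.
by rewrite sum_nat_const card_ord.
Qed.

Lemma emb_inj f : embedding pi tau f -> injective f.
Proof.
move=> E i j Hf; have [E1 _] := E i j; have [E2 _] := E j i.
rewrite Hf ltnn in E1 E2; apply: val_inj; case: (ltngtP i j) => //.
- by rewrite E1.
- by rewrite E2.
Qed.

Lemma emb_le f : embedding pi tau f -> k <= n.
Proof. move=> /emb_inj /leq_card; by rewrite !card_ord. Qed.

End Loc.

Lemma good_ext k n (pi : {perm 'I_k}) (tau : {perm 'I_n}) A A' :
  good pi tau A -> (forall a j, a <> 2 -> a <> 7 -> A' a j = A a j) -> good pi tau A'.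
Proof.
rewrite /good => -[G0 G1 G3 G5 G6] H; split.
- by move=> i; rewrite H.
- by move=> i; rewrite H.
- by move=> j Hj; rewrite H // G3.
- by move=> i Hi; rewrite H // G5.
- by move=> i Hi; rewrite H // G6.
Qed.

Set Implicit Arguments. Unset Strict Implicit. Unset Printing Implicit Defensive.

Lemma regs_set s x v y : regs (set_reg s x v) y = if y == x then v else regs s y.
Proof. by []. Qed.
Lemma arrs_set_reg s x v a j : arrs (set_reg s x v) a j = arrs s a j.
Proof. by []. Qed.
Lemma regs_set_mem s a i v y : regs (set_mem s a i v) y = regs s y.
Proof. by []. Qed.
Lemma arrs_set s a i v b j :
  arrs (set_mem s a i v) b j = if (b == a) && (j == i) then v else arrs s b j.
Proof. by []. Qed.

Lemma lowN_M f i M : (forall j, j < i -> f j < M) ->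
  (M = 0 \/ exists j, j < i /\ f j + 1 = M) -> lowN f i = (f i + 1 < M).
Proof.
rewrite /lowN; move=> H1 [E|[j0 [Hj0 E]]].
- rewrite E ltn0; apply/negbTE/hasPn => j; rewrite mem_iota => /andP[_ Hj].
  by have := H1 j Hj; rewrite E.
- apply/idP/idP.
  + case/hasP=> j; rewrite mem_iota add0n => /andP[_ Hj] H; have := H1 j Hj; lia.
  + move=> H; apply/hasP; exists j0; [by rewrite mem_iota|lia].
Qed.

Definition LOWLOOP (src dst len : nat) : cmd :=
  CSeq (CAssign 3 (AConst 0)) (CSeq (CAssign 4 (AConst 0))
  (CWhile (BLt (AVar 3) (AVar len))
   (CSeq (CIf (BLt (AAdd (ARead src (AVar 3)) (AConst 1)) (AVar 4))
            (CWrite dst (AVar 3) (AConst 1)) (CWrite dst (AVar 3) (AConst 0)))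
    (CSeq (CIf (BLt (AVar 4) (AAdd (ARead src (AVar 3)) (AConst 1)))
            (CAssign 4 (AAdd (ARead src (AVar 3)) (AConst 1))) CSkip)
      (CAssign 3 (AAdd (AVar 3) (AConst 1))))))).

Lemma low_loop src dst len s : src <> dst -> len <> 3 -> len <> 4 ->
  runs (LOWLOOP src dst len) s (fun s' =>
   (forall r, r <> 3 -> r <> 4 -> regs s' r = regs s r) /\
   (forall a j, a <> dst -> arrs s' a j = arrs s a j) /\
   (forall j, j < regs s len -> arrs s' dst j = lowN (arrs s src) j))
   (regs s len * 6 + 3).
Proof.
move=> Hsd H3 H4.
set N := regs s len; set f := arrs s src.
pose I s' := [/\ (forall r, r <> 3 -> r <> 4 -> regs s' r = regs s r),
   (forall a j, a <> dst -> arrs s' a j = arrs s a j),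
   regs s' 3 <= N,
   ((forall j, j < regs s' 3 -> f j < regs s' 4) /\
   (regs s' 4 = 0 \/ exists j, j < regs s' 3 /\ f j + 1 = regs s' 4)) &
   (forall j, j < regs s' 3 -> arrs s' dst j = lowN f j)].
have -> : N * 6 + 3 = (N * 6 + 1).+2 by lia.
apply: runs_assign_seq; apply: runs_assign_seq.
set s2 := set_reg _ 4 _.
have HI2 : I s2.
  rewrite /I /s2 /=; split=> //.
  - by move=> r H3' H4'; rewrite (introF eqP H4') (introF eqP H3').
  - by split=> //; left.
apply: runs_weak; first apply: (runs_while (I := I) (m := fun s' => N - regs s' 3) (cb := 5)) HI2.

- move=> s' [R A Hi [Hf HM] Hd] /=; rewrite (R len) // -/N => Hlt.
  have Hsrc : forall j, arrs s' src j = f j by move=> j; rewrite A.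
  set i := regs s' 3 in Hi Hf HM Hd Hlt *; set M := regs s' 4 in Hf HM *.
  have HL : lowN f i = (f i + 1 < M) by apply: lowN_M.
  have key : forall s5, (forall r, r <> 3 -> r <> 4 -> regs s5 r = regs s' r) ->
     regs s5 3 = i.+1 -> regs s5 4 = maxn M (f i + 1) ->
     (forall a j, arrs s5 a j = if (a == dst) && (j == i) then nat_of_bool (lowN f i) else arrs s' a j) ->
     I s5 /\ N - regs s5 3 < N - regs s' 3.
    move=> s5 R5 E3 E4 A5; split; last by rewrite E3; lia.
    rewrite /I E3 E4; split.
    + by move=> r H3' H4'; rewrite R5 // R.
    + by move=> a j Ha; rewrite A5 -A //; move/eqP/negbTE: Ha => ->.
    + lia.
    + split.
      * move=> j; rewrite ltnS leq_eqVlt => /orP[/eqP->|Hj]; first by lia.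
        by have := Hf j Hj; lia.
      * right; case: HM => [HM0|[j0 [Hj0 Ej0]]].
          by exists i; split=> //; rewrite -/M HM0 max0n.
        case: (leqP M (f i + 1)) => Hm.
          by exists i; split=> //; rewrite (maxn_idPr Hm).
        by exists j0; split; [lia|].
    + move=> j Hj; rewrite A5 eqxx /=.
      case: eqP => [->//|Hji]; apply: Hd; lia.
  have Esd : (src == dst) = false by apply/eqP.
  apply: runs_if_seq; case: ifP => C1; apply: runs_write_seq;
  apply: runs_if_seq; case: ifP => C2;
  try apply: runs_assign_seq; try apply: runs_skip_seq; apply: runs_assign;
  move: C1 C2 => /=; rewrite ?Esd /= ?Hsrc -/i -/M => C1 C2;
  apply: key => [r H3' H4'| | |a j] /=; rewrite ?Esd /= ?Hsrc -/i -/M;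
  try (by rewrite (introF eqP H3') ?(introF eqP H4'));
  try (by rewrite addn1);
  try (by rewrite HL C1);
  try (by rewrite (maxn_idPr (ltnW C2)));
  try (by apply/esym/maxn_idPl; rewrite leqNgt C2).
- by rewrite /s2 /= subn0.
- move=> s' [[R A Hi [Hf HM] Hd] /=]; rewrite (R len) // -/N => Hge.
  split=> //; split=> // j Hj; apply: Hd; lia.
Qed.

Definition FORLOOP (a : nat) (e v : aexp) (len : nat) : cmd :=
  CSeq (CAssign 3 (AConst 0))
  (CWhile (BLt (AVar 3) (AVar len))
     (CSeq (CWrite a e v) (CAssign 3 (AAdd (AVar 3) (AConst 1))))).

Lemma for_loop a e v len s (F G : nat -> nat) : len <> 3 ->
  (forall i j, i < regs s len -> j < regs s len -> F i = F j -> i = j) ->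
  (forall s', (forall r, r <> 3 -> regs s' r = regs s r) ->
      (forall b j, b <> a -> arrs s' b j = arrs s b j) ->
      aeval s' e = F (regs s' 3) /\ aeval s' v = G (regs s' 3)) ->
  runs (FORLOOP a e v len) s (fun s' =>
   (forall r, r <> 3 -> regs s' r = regs s r) /\
   (forall b j, b <> a -> arrs s' b j = arrs s b j) /\
   (forall j, j < regs s len -> arrs s' a (F j) = G j))
   (regs s len * 3 + 2).
Proof.
move=> H3 Finj He.
set N := regs s len.
pose I s' := [/\ (forall r, r <> 3 -> regs s' r = regs s r),
   (forall b j, b <> a -> arrs s' b j = arrs s b j),
   regs s' 3 <= N &
   (forall j, j < regs s' 3 -> arrs s' a (F j) = G j)].
have -> : N * 3 + 2 = (N * 3 + 1).+1 by lia.
apply: runs_assign_seq.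
set s2 := set_reg _ 3 _.
have HI2 : I s2.
  rewrite /I /s2 /=; split=> //.
  by move=> r H3'; rewrite (introF eqP H3').
apply: runs_weak; first apply: (runs_while (I := I) (m := fun s' => N - regs s' 3) (cb := 2)) HI2.
- move=> s' [R A Hi Hd] /=; rewrite (R len) // -/N => Hlt.
  have [Ee Ev] := He s' R A.
  apply: runs_write_seq; apply: runs_assign; rewrite /= Ee Ev.
  split; last by lia.
  split=> /=.
  + by move=> r H3'; rewrite (introF eqP H3') R.
  + by move=> b j Hb; rewrite (introF eqP Hb) A.
  + lia.
  + move=> j; rewrite eqxx /= addn1 ltnS leq_eqVlt => /orP[/eqP->|Hj]; first by rewrite eqxx.
    case: eqP => [/Finj E|_]; last exact: Hd.
    have := E (ltn_trans Hj Hlt) Hlt; lia.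
- by rewrite /s2 /= subn0.
- move=> s' [[R A Hi Hd] /=]; rewrite (R len) // -/N => Hge.
  split=> //; split=> // j Hj; apply: Hd; lia.
Qed.

Set Implicit Arguments. Unset Strict Implicit. Unset Printing Implicit Defensive.

Definition xb := ARead 2 (AVar 6).
Definition inKb := BEq (ARead 3 xb) (ARead 5 (AVar 6)).
Definition a_e := ARead 6 (ASub (ARead 0 (AVar 6)) (AConst 1)).
Definition xa := ARead 2 a_e.
Definition c1 := BNot inKb.
Definition c2 := BAnd (BLt (AConst 0) (AVar 6))
                      (BLt xb (AAdd (ARead 2 (ASub (AVar 6) (AConst 1))) (AConst 1))).
Definition c3 := BAnd (BLt (AConst 0) (ARead 0 (AVar 6)))
   (BAnd (BEq (ARead 3 xa) (ARead 5 a_e)) (BAnd inKb (BLt (ARead 1 xb) (ARead 1 xa)))).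
Definition VIOL := BNot (BAnd (BNot c1) (BAnd (BNot c2) (BNot c3))).

Lemma VIOL_eval s : beval s VIOL = violm (arrs s) (regs s 6).
Proof. by rewrite /= /violm -!negb_or negbK. Qed.

Definition PUSH e := CSeq (CWrite 7 (AVar 5) e) (CAssign 5 (AAdd (AVar 5) (AConst 1))).

Definition BODY :=
  CSeq (CAssign 5 (ASub (AVar 5) (AConst 1)))
  (CSeq (CAssign 6 (ARead 7 (AVar 5)))
  (CIf VIOL
     (CSeq (CWrite 2 (AVar 6) (AAdd xb (AConst 1)))
        (CIf (BLt xb (AVar 1))
           (CSeq (PUSH (AVar 6))
           (CSeq (CIf (BLt (AAdd (AVar 6) (AConst 1)) (AVar 0)) (PUSH (AAdd (AVar 6) (AConst 1))) CSkip)
                 (CIf (BLt (AAdd (ARead 0 (AVar 6)) (AConst 1)) (AVar 0))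
                      (PUSH (ARead 6 (AAdd (ARead 0 (AVar 6)) (AConst 1)))) CSkip)))
           (CAssign 7 (AConst 1))))
     CSkip)).

Definition LOOP := CWhile (BAnd (BLt (AConst 0) (AVar 5)) (BEq (AVar 7) (AConst 0))) BODY.

Set Implicit Arguments. Unset Strict Implicit. Unset Printing Implicit Defensive.

Definition Frame (k : nat) s s' :=
  [/\ (forall r, r <> 5 -> regs s' r = regs s r),
      (forall a j, a <> 7 -> arrs s' a j = arrs s a j),
      (forall j, j < regs s 5 -> arrs s' 7 j = arrs s 7 j),
      regs s 5 <= regs s' 5 &
      (forall j, j < regs s' 5 -> regs s 5 <= j -> arrs s' 7 j < k)].

Lemma Frame_refl k s : Frame k s s.
Proof. split=> // j H1 H2; lia. Qed.

Lemma Frame_trans k s1 s2 s3 : Frame k s1 s2 -> Frame k s2 s3 -> Frame k s1 s3.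
Proof.
move=> [R1 A1 S1 L1 N1] [R2 A2 S2 L2 N2]; split.
- by move=> r H; rewrite R2 // R1.
- by move=> a j H; rewrite A2 // A1.
- by move=> j H; rewrite S2 ?S1 //; lia.
- lia.
- move=> j H1 H2; case: (ltnP j (regs s2 5)) => H3.
  + by rewrite S2 // N1.
  + exact: N2.
Qed.

Definition pushst s w := set_reg (set_mem s 7 (regs s 5) w) 5 (regs s 5 + 1).

Lemma Frame_push k s w : w < k -> Frame k s (pushst s w).
Proof.
move=> Hw; split=> /=.
- by move=> r H; rewrite (introF eqP H).
- by move=> a j H; rewrite (introF eqP H).
- by move=> j H; rewrite (_ : (j == regs s 5) = false) ?andbF //; apply/eqP; lia.
- lia.
- move=> j H1 H2; rewrite (_ : j == regs s 5) //; apply/eqP; lia.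
Qed.

Lemma runs_push e c s Q T :
  runs c (pushst s (aeval s e)) Q T -> runs (CSeq (PUSH e) c) s Q T.+2.
Proof.
move=> H; apply: runs_seqA; apply: runs_write_seq; apply: runs_assign_seq.
exact: H.
Qed.

Lemma runs_push_last e s Q T :
  Q (pushst s (aeval s e)) -> runs (PUSH e) s Q T.+2.
Proof. move=> H; apply: runs_write_seq; exact: runs_assign_any. Qed.

Definition Post k (bc : bool) (w : nat) s s' :=
  [/\ Frame k s s', regs s' 5 <= regs s 5 + 1 &
      (bc -> exists j, [/\ regs s 5 <= j, j < regs s' 5 & arrs s' 7 j = w])].

Lemma Post_push k s w : w < k -> Post k true w s (pushst s w).
Proof.
move=> Hw; split; first exact: Frame_push.
- rewrite /= ; lia.
- move=> _; exists (regs s 5); split=> //=; first lia.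
  by rewrite /= eqxx.
Qed.

Lemma runs_cpush k bc e c s Q T :
  (beval s bc -> aeval s e < k) ->
  (forall s', Post k (beval s bc) (aeval s e) s s' -> runs c s' Q T) ->
  runs (CSeq (CIf bc (PUSH e) CSkip) c) s Q T.+3.
Proof.
move=> Hk H; apply: runs_if_seq; case: ifP => Hb.
- apply: runs_weak; first apply: runs_push.
  + apply: H; rewrite Hb; apply: Post_push; exact: Hk.
  + by [].
  + by [].
- apply: runs_weak; first apply: runs_skip_seq.
  + apply: H; rewrite Hb; split=> //; [exact: Frame_refl|lia].
  + by [].
  + by [].
Qed.

Lemma runs_cpush_last k bc e s (Q : mstate -> Prop) T :
  (beval s bc -> aeval s e < k) ->
  (forall s', Post k (beval s bc) (aeval s e) s s' -> Q s') ->
  runs (CIf bc (PUSH e) CSkip) s Q T.+3.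
Proof.
move=> Hk H; apply: runs_if; case: ifP => Hb.
- apply: runs_push_last; apply: H; rewrite Hb; apply: Post_push; exact: Hk.
- apply: runs_skip_any; apply: H; rewrite Hb; split=> //; [exact: Frame_refl|lia].
Qed.

Set Implicit Arguments. Unset Strict Implicit. Unset Printing Implicit Defensive.

Section Main.
Variables (k n : nat) (pi : {perm 'I_k}) (tau : {perm 'I_n}).
Hypotheses (Api : avoids321 pi) (Rpi : rigid pi) (Atau : avoids321 tau).
Local Notation pn := (perm_nat pi).
Local Notation tn := (perm_nat tau).

Definition stackok s := forall j, j < regs s 5 -> arrs s 7 j < k.
Definition covers s := forall b, b < k -> violm (arrs s) b ->
  exists j, j < regs s 5 /\ arrs s 7 j = b.
Definition noemb := ~ exists f, embedding pi tau f.

Definition Inv s := [/\ regs s 0 = k, regs s 1 = n, regs s 2 = 0, good pi tau (arrs s) &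
   (regs s 7 = 0 /\ xok k n (arrs s) /\ below pi tau (arrs s) /\ stackok s /\ covers s)
   \/ (regs s 7 = 1 /\ noemb)].

Definition Ssum s := \sum_(i < k) (n - arrs s 2 i).
Definition meas s := if regs s 7 == 0 then regs s 5 + 4 * Ssum s + 1 else 0.

Definition COND := BAnd (BLt (AConst 0) (AVar 5)) (BEq (AVar 7) (AConst 0)).

Lemma body_ok s : Inv s -> beval s COND ->
  runs BODY s (fun s' => Inv s' /\ meas s' < meas s) 13.
Proof.
move=> [R0 R1 R2 G [[F0 [X [B [SO CV]]]]|[F1 NE]]] /= /andP[Hsp /eqP Hf0]; last first.
  by rewrite F1 in Hf0.
set sp := regs s 5 in Hsp SO CV *.
set x := arrs s 2.
have Hms : meas s = sp + 4 * Ssum s + 1 by rewrite /meas F0.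
rewrite /BODY; apply: runs_assign_seq; apply: runs_assign_seq.
set b := aeval _ (ARead 7 (AVar 5)).
have Eb : b = arrs s 7 (sp - 1) by [].
have Hb : b < k by rewrite Eb; apply: SO; rewrite -/sp; lia.
apply: runs_if; rewrite VIOL_eval /= -/b.
case V: (violm (arrs s) b).
-
  apply: runs_write_seq.
  have Hjust := justify Rpi Atau Hb G X B V.
  apply: runs_if; rewrite /= -/b eqxx /= -/x.
  set s2 := set_mem _ 2 b _.
  have R2r : forall r, r <> 5 -> r <> 6 -> regs s2 r = regs s r.
    by move=> r H5 H6; rewrite /s2 /= (introF eqP H5) (introF eqP H6).
  have R25 : regs s2 5 = sp - 1 by [].
  have R26 : regs s2 6 = b by [].
  have A2a : forall a j, a <> 2 -> arrs s2 a j = arrs s a j.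
    by move=> a j Ha; rewrite /s2 /= (introF eqP Ha).
  have A22 : forall i, arrs s2 2 i = if i == b then x b + 1 else x i.
    by move=> i; rewrite /s2 /=.
  rewrite R1; case Hlt: (x b + 1 < n).
  + apply: runs_push; set s3 := pushst _ _.
    have R3r : forall r, r <> 5 -> regs s3 r = regs s2 r.
      by move=> r H5; rewrite /s3 /pushst /= (introF eqP H5).
    have R35 : regs s3 5 = sp by rewrite /s3 /pushst /= -/sp; lia.
    have A3a : forall a j, a <> 7 -> arrs s3 a j = arrs s2 a j.
      by move=> a j Ha; rewrite /s3 /pushst /= (introF eqP Ha).
    have A37 : arrs s3 7 (sp - 1) = b by rewrite /s3 /pushst /= -/sp !eqxx.
    have A37' : forall j, j < sp - 1 -> arrs s3 7 j = arrs s 7 j.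
      move=> j Hj; rewrite /s3 /pushst /= -/sp (_ : (j == sp - 1) = false) //.
      by apply/eqP; lia.
    have E3c : beval s3 (BLt (AAdd (AVar 6) (AConst 1)) (AVar 0)) = (b + 1 < k).
      by rewrite /= R0.
    have E3w : aeval s3 (AAdd (AVar 6) (AConst 1)) = b + 1 by [].
    apply: (runs_cpush (k:=k)) => [|s4]; first by rewrite E3c E3w.
    rewrite E3c E3w => -[Fr34 L34 M34].
    have [R4r A4a S4 L4 N4] := Fr34.
    have E4c : beval s4 (BLt (AAdd (ARead 0 (AVar 6)) (AConst 1)) (AVar 0)) = (pn b + 1 < k).
      have [G0 _ _ _ _] := G.
      by rewrite /= !R4r // !R3r // R26 R2r // R0 A4a // A3a // A2a // G0.
    have E4w : aeval s4 (ARead 6 (AAdd (ARead 0 (AVar 6)) (AConst 1))) = arrs s 6 (pn b + 1).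
      have [G0 _ _ _ _] := G.
      by rewrite /= !R4r // !R3r // R26 !A4a // !A3a // !A2a // G0.
    apply: (runs_cpush_last (k:=k)) => [|s5].
      rewrite E4c E4w => Hc; have [] := inv_spec G Hc; done.
    rewrite E4c E4w => -[Fr45 L45 M45].
    have Fr35 := Frame_trans Fr34 Fr45.
    have [R5r A5a S5 L5 N5] := Fr35.
    have [R45 A45 S45 L45' N45] := Fr45.
    have R5 : forall r, r <> 5 -> r <> 6 -> regs s5 r = regs s r.
      by move=> r H5 H6; rewrite R5r // R3r // R2r.
    have A5 : forall a j, a <> 2 -> a <> 7 -> arrs s5 a j = arrs s a j.
      by move=> a j H2 H7; rewrite A5a // A3a // A2a.
    have X5 : forall i, arrs s5 2 i = if i == b then x b + 1 else x i.
      by move=> i; rewrite A5a // A3a // A22.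
    have Gs5 : good pi tau (arrs s5) := good_ext G A5.
    have Hxb : x b < n := X b Hb.
    have Hsum : Ssum s5 + 1 = Ssum s.
      apply: (sum_dec Hb Hxb); last by rewrite X5 eqxx.
      by move=> i Hi; rewrite X5 (introF eqP Hi).
    have Hsp5 : regs s5 5 <= sp + 2 by lia.
    have F5 : regs s5 7 = 0 by rewrite R5.
    split; last by rewrite Hms /meas F5 /=; lia.
    split; [by rewrite R5|by rewrite R5|by rewrite R5|exact: Gs5|left].
    split=> //; split; [|split; [|split]].
    * move=> i Hi; rewrite X5; case: eqP => // _; exact: X.
    * move=> y E i; rewrite X5; case: eqP => [Ei|_]; last exact: B.
      have -> : i = Ordinal Hb by apply: val_inj.
      by rewrite addn1; exact: Hjust.
    * move=> j Hj; case: (ltnP j (sp - 1)) => Hj1.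
      - rewrite S5 ?R35; last by lia.
        rewrite A37' //; apply: SO; rewrite -/sp; lia.
      - case: (ltnP j sp) => Hj2.
        + have -> : j = sp - 1 by lia.
          by rewrite S5 ?R35 ?A37 //; lia.
        + by apply: N5; rewrite ?R35.
    * move=> b' Hb' Vb'.
      case: (eqVneq b' b) => [->|Nb].
        exists (sp - 1); split; first by lia.
        by rewrite S5 ?R35 ?A37 //; lia.
      case: (eqVneq b' b.+1) => [Eb1|Nb1].
        have Hc : b + 1 < k by rewrite addn1 -Eb1.
        have [j [Hj1 Hj2 Hj3]] := M34 Hc.
        exists j; split; first by lia.
        by rewrite S45 // Hj3 Eb1 addn1.
      case: (boolP ((pn b + 1 < k) && (b' == arrs s 6 (pn b + 1)))) => [/andP[Hc /eqP ->]|Nc].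
        have [j [Hj1 Hj2 Hj3]] := M45 Hc.
        by exists j; split.
      have HX : forall i, i <> b -> arrs s5 2 i = arrs s 2 i.
        by move=> i Hi; rewrite X5 (introF eqP Hi).
      have N1 : b' <> b by move/eqP: Nb.
      have N2 : b' <> b.+1 by move/eqP: Nb1.
      have N3 : ~ (pn b + 1 < k /\ b' = arrs s 6 (pn b + 1)).
        by move=> [H1 H2]; move: Nc; rewrite H1 H2 eqxx.
      move: Vb'; rewrite (viol_local G Hb Hb' A5 HX N1 N2 N3) => Vb'; have [j [Hj1 Hj2]] := CV b' Hb' Vb'.
      have Hj3 : j < sp - 1.
        case: (ltnP j (sp - 1)) => // H; have E : j = sp - 1 by lia.
        by move: Nb; rewrite -Hj2 E -Eb eqxx.
      exists j; split; first by lia.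
      by rewrite S5 ?R35 ?A37' //; lia.
  + apply: runs_assign_any; split; last by rewrite Hms /meas /=; lia.
    have A6 : forall a j, a <> 2 -> a <> 7 -> arrs (set_reg s2 7 (aeval s2 (AConst 1))) a j = arrs s a j.
      by move=> a j H2 H7; rewrite /= (introF eqP H2).
    split; [by []|by []|by []|exact: good_ext G A6|right].
    split=> // -[y E]; have := Hjust y E; have := ltn_ord (y (Ordinal Hb)).
    move: Hlt; rewrite -/x; lia.
- apply: runs_skip_any; split.
  + split=> //=; left; split=> //; split=> //; split=> //; split.
    * move=> j /= Hj; apply: SO; rewrite -/sp; lia.
    * move=> b' Hb' Vb'; have [j [Hj Ej]] := CV b' Hb' Vb'.
      exists j; split=> //.
      case: (ltnP j (sp - 1)) => // Hj2.
      have Ej' : j = sp - 1 by lia.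
      by move: Vb'; rewrite -Ej Ej' -Eb V.
  + rewrite Hms /meas /= F0 /Ssum /=; lia.
Qed.

End Main.

Set Implicit Arguments. Unset Strict Implicit. Unset Printing Implicit Defensive.

Definition FINAL := CIf (BEq (AVar 7) (AConst 0)) (CAssign 2 (AConst 1)) CSkip.
Definition MAIN :=
  CSeq (LOWLOOP 1 3 1) (CSeq (LOWLOOP 0 5 0)
  (CSeq (FORLOOP 6 (ARead 0 (AVar 3)) (AVar 3) 0)
  (CSeq (FORLOOP 7 (AVar 3) (AVar 3) 0)
  (CSeq (CAssign 5 (AVar 0)) (CSeq LOOP FINAL))))).
Definition PROG :=
  CIf (BEq (AVar 0) (AConst 0)) (CAssign 2 (AConst 1))
      (CIf (BLt (AVar 1) (AVar 0)) CSkip MAIN).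

Definition Qok k n (pi : {perm 'I_k}) (tau : {perm 'I_n}) (s' : mstate) :=
  ((exists f, embedding pi tau f) ->
             regs s' 2 = 1 /\
             exists f, min_embedding pi tau f /\
                       forall i : 'I_k, arrs s' 2 i = val (f i)) /\
  (~ (exists f, embedding pi tau f) -> regs s' 2 = 0).

Lemma main_ok k n (pi : {perm 'I_k}) (tau : {perm 'I_n}) :
  avoids321 pi -> rigid pi -> avoids321 tau -> 0 < k -> k <= n ->
  runs MAIN (init_state pi tau) (Qok pi tau)
     ((n * 6 + 3) + ((k * 6 + 3) + ((k * 3 + 2) + ((k * 3 + 2) +
       (1 + (((k + 4 * (k * n) + 1) * 14 + 1) + 2)))))).
Proof.
move=> Api Rpi Atau Hk Hkn.
set s0 := init_state pi tau.
have n13 : 1 <> 3 by []. have n14 : 1 <> 4 by [].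
have n03 : 0 <> 3 by []. have n04 : 0 <> 4 by [].
have n05 : 0 <> 5 by []. have n13' : 1 <> 3 by [].
rewrite /MAIN; apply: (runs_seq_w (low_loop (src:=1) (dst:=3) (len:=1) s0 _ _ _)) => //.
move=> s1 [R1 [A1 L1]].
apply: (runs_seq_w (low_loop (src:=0) (dst:=5) (len:=0) s1 _ _ _)) => //.
  by rewrite R1.
move=> s2 [R2 [A2 L2]].
have Sr : forall r, r <> 3 -> r <> 4 -> regs s2 r = regs s0 r by move=> r ? ?; rewrite R2 // R1.
have Sa : forall a j, a <> 3 -> a <> 5 -> arrs s2 a j = arrs s0 a j by move=> a j ? ?; rewrite A2 // A1.
have S0 : forall j, arrs s2 0 j = perm_nat pi j by move=> j; rewrite Sa.
have S1 : forall j, arrs s2 1 j = perm_nat tau j by move=> j; rewrite Sa.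
have S3 : forall j, j < n -> arrs s2 3 j = lowN (perm_nat tau) j by move=> j Hj; rewrite A2 // L1.
have S5 : forall j, j < k -> arrs s2 5 j = lowN (perm_nat pi) j.
  move=> j Hj; rewrite L2; last by rewrite R1.
  by congr (nat_of_bool _); apply: lowN_ext => i; rewrite A1.
have Rk : regs s2 0 = k by rewrite Sr.
apply: (runs_seq_w (for_loop (a:=6) (e:=ARead 0 (AVar 3)) (v:=AVar 3) (len:=0) (s:=s2)
   (F := perm_nat pi) (G := id) _ _ _)) => //.
- by rewrite Rk; apply: perm_nat_inj.
- by move=> s' Rs As; rewrite /= As // S0.
- by rewrite Rk.
move=> s3 [R3 [A3 L3]].
apply: (runs_seq_w (for_loop (a:=7) (e:=AVar 3) (v:=AVar 3) (len:=0) (s:=s3)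
   (F := id) (G := id) _ _ _)) => //.
- by rewrite R3 // Rk.
move=> s4 [R4 [A4 L4]].
rewrite add1n; apply: runs_assign_seq; set s5 := set_reg s4 5 _.
have Rk3 : regs s3 0 = k by rewrite R3.
have R5r : forall r, r <> 3 -> r <> 4 -> r <> 5 -> regs s5 r = regs s0 r.
  by move=> r H3 H4 H5; rewrite /s5 /= (introF eqP H5) R4 // R3 // Sr.
have R55 : regs s5 5 = k by rewrite /s5 /= R4 // Rk3.
have A5a : forall a j, a <> 6 -> a <> 7 -> arrs s5 a j = arrs s2 a j.
  by move=> a j H6 H7; rewrite /s5 /= A4 // A3.
have HI5 : Inv pi tau s5.
  split; [by rewrite R5r|by rewrite R5r|by rewrite R5r|split|left].
  - by move=> i; rewrite A5a.
  - by move=> i; rewrite A5a.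
  - by move=> j Hj; rewrite A5a // S3.
  - by move=> i Hi; rewrite A5a // S5.
  - by move=> i Hi; rewrite /s5 /= A4 // L3 // Rk.
  - split; first by rewrite R5r.
    split; first by move=> i Hi; rewrite A5a // Sa //=; lia.
    split; first by move=> y _ i; rewrite A5a // Sa.
    split.
    + by move=> j; rewrite R55 /s5 /= => Hj; rewrite L4 // Rk3.
    + move=> b Hb _; exists b; split; first by rewrite R55.
      by rewrite /s5 /= L4 // Rk3.
have Hm5 : meas k n s5 <= k + 4 * (k * n) + 1.
  rewrite /meas R5r // R55 /=; have := sum_le k n (arrs s5 2); rewrite /Ssum; lia.
apply: (runs_seq_w (runs_while (body_ok Rpi Atau) HI5)).
  by apply: leq_add => //; apply: leq_mul.
move=> s6 [I6 C6].
have [R60 R61 R62 G6 D6] := I6.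
rewrite /FINAL; apply: runs_if; case: ifP => /= F6.
- apply: runs_assign_any.
  case: D6 => [[F0 [X [B [SO CV]]]]|[F1 _]]; last by move: F6; rewrite F1.
  move: C6; rewrite /= F0 /= andbT => /negbT; rewrite -leqNgt leqn0 => /eqP SP0.
  have NV : forall b, b < k -> ~~ violm (arrs s6) b.
    move=> b Hb; apply/negP => V; have [j [Hj _]] := CV b Hb V; by rewrite SP0 in Hj.
  have ME := final Rpi Atau X G6 B NV.
  split.
  + move=> _; split; first by [].
    by exists (mkf X); split.
  + by move=> NE; exfalso; apply: NE; exists (mkf X); case: ME.
- apply: runs_skip_any.
  case: D6 => [[F0 _]|[F1 NE]]; first by move: F6; rewrite F0.
  by split=> // Ex; exfalso; apply: NE.
Qed.

Theorem proposition2 :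
  exists (P : cmd) (C : nat),
  forall (k n : nat) (pi : {perm 'I_k}) (tau : {perm 'I_n}),
    avoids321 pi -> rigid pi -> avoids321 tau ->
    exists (t : nat) (s' : mstate),
      [/\ exec P (init_state pi tau) t s',
          t <= C * (k * n) + C &
          ((exists f, embedding pi tau f) ->
             regs s' 2 = 1 /\
             exists f, min_embedding pi tau f /\
                       forall i : 'I_k, arrs s' 2 i = val (f i)) /\
          (~ (exists f, embedding pi tau f) -> regs s' 2 = 0)].
Proof.
exists PROG, 100 => k n pi tau Api Rpi Atau.
suff [t [s' [E [Ht Q]]]] : runs PROG (init_state pi tau) (Qok pi tau) (100 * (k * n) + 100).
  by exists t, s'; split.
rewrite /PROG; have -> : 100 * (k * n) + 100 = (100 * (k * n) + 99).+1 by lia.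
apply: runs_if => /=; case: eqP => Hk0.
- rewrite addnS; apply: runs_assign_any; subst k.
  have f : 'I_0 -> 'I_n by case=> m Hm; exfalso; rewrite ltn0 in Hm.
  have Ef : embedding pi tau f by case.
  have Mf : min_embedding pi tau f.
    split=> //; split; first by case.
    by move=> g _ _; case.
  split.
  + by move=> _; split=> //; exists f; split=> //; case.
  + by move=> NE; exfalso; apply: NE; exists f.
- have Hk : 0 < k by lia.
  rewrite addnS; apply: runs_if => /=; case: ifP => Hnk.
  + rewrite addnS; apply: runs_skip_any; split=> //.
    by move=> [f /emb_le Hle]; move: Hnk; rewrite ltnNge Hle.
  + have Hkn : k <= n by rewrite leqNgt Hnk.
    apply: runs_weak; first exact: main_ok.
    * have h1 : n <= k * n by apply: leq_pmull.
      have h2 : k <= k * n by apply: leq_pmulr; lia.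
      lia.
    * by [].
Qed.
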